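(* Let $k$ be an algebraically closed field of characteristic $0$, let $K$ be a function field of dimension $2$ over $k$, and let $(R,\mathfrak m)$ be a $2$-dimensional regular local ring with fraction field $K$ and residue field $R/\mathfrak m\cong k$. Let $\nu$ be a non-divisorial valuation of $K$ (i.e. a valuation whose residue field has transcendence degree $0$ over $k$) centered on $R$, with value semigroup $S=\{\nu(x)\mid x\in\mathfrak m\setminus\{0\}\}$. Then for every $s\in S$, the length $l(s)=\dim_k\big(I_s/I_s^+\big)$ equals $1$, where $I_s=\{x\in R\mid \nu(x)\ge s\}$ and $I_s^+=\{x\in R\mid \nu(x)>s\}$.
   Context: A valuation $\nu$ of $K$ centered on $R$ has valuation ring $(V,\mathfrak m_V)$ with $R\subseteq V$, $\mathfrak m_V\cap R=\mathfrak m$. The divisorial valuations are those with rank $1$, rational rank $1$ and residue field $V/\mathfrak m_V$ of transcendence degree $1$ over $k$; by Abhyankar's inequality every other valuation centered on $R$ has residue field of transcendence degree $0$ over $k$, and these are called non-divisorial. The quotient $I_s/I_s^+$ is regarded as a vector space over $R/\mathfrak m\cong k$. *)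

(* Defs.v *)
From HB Require Import structures.
From mathcomp Require Import all_boot all_order all_algebra.
From mathcomp Require Import mpoly.
Set Implicit Arguments. Unset Strict Implicit. Unset Printing Implicit Defensive.
Import Order.TTheory GRing.Theory Num.Theory.
Local Open Scope ring_scope.

Section FieldDefs.
Variables (k K : fieldType) (iota : {rmorphism k -> K}).

Definition alg_indep (n : nat) (g : 'I_n -> K) : Prop :=
  forall p : {mpoly k[n]}, mmap iota g p = 0 -> p = 0.

Definition fin_gen_field : Prop :=
  exists (n : nat) (g : 'I_n -> K), forall z : K,
    exists p q : {mpoly k[n]}, mmap iota g q != 0 /\ z = mmap iota g p / mmap iota g q.

Definition trdeg2 : Prop :=
  (exists g : 'I_2 -> K, alg_indep g) /\ (forall g : 'I_3 -> K, ~ alg_indep g).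

Definition function_field_dim2 : Prop := fin_gen_field /\ trdeg2.

Variable R : {pred K}.

Definition is_subring : Prop :=
  [/\ 0 \in R, 1 \in R, (forall x y, x \in R -> y \in R -> x - y \in R)
    & (forall x y, x \in R -> y \in R -> x * y \in R)].

Definition is_fraction_field : Prop :=
  forall z : K, exists a b, [/\ a \in R, b \in R, b != 0 & z = a / b].

Definition nonunits : pred K :=
  fun x => (x \in R) && ~~ ((x != 0) && (x^-1 \in R)).

Definition is_ideal (I : pred K) : Prop :=
  [/\ {subset I <= R}, 0 \in I, (forall x y, x \in I -> y \in I -> x + y \in I)
    & (forall r x, r \in R -> x \in I -> r * x \in I)].

Definition fin_gen_ideal (I : pred K) : Prop :=
  exists s : seq K, all (fun x => x \in I) s /\
    forall x, x \in I -> exists c : 'I_(size s) -> K,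
      (forall i, c i \in R) /\ x = \sum_(i < size s) c i * s`_i.

Definition noetherian : Prop := forall I : pred K, is_ideal I -> fin_gen_ideal I.

Definition is_prime_ideal (P : pred K) : Prop :=
  [/\ is_ideal P, 1 \notin P
    & forall x y, x \in R -> y \in R -> x * y \in P -> x \in P \/ y \in P].

Definition prime_chain (n : nat) (P : nat -> pred K) : Prop :=
  (forall i, (i <= n)%N -> is_prime_ideal (P i)) /\
  (forall i, (i < n)%N -> {subset P i <= P i.+1} /\ exists x, x \in P i.+1 /\ x \notin P i).

Definition krull_dim2 : Prop :=
  (exists P, prime_chain 2 P) /\ (forall P, ~ prime_chain 3 P).

Definition is_local : Prop := is_ideal nonunits.

Definition regular_local_dim2 : Prop :=
  [/\ is_subring, noetherian, is_local, krull_dim2 &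
    exists a b, [/\ a \in nonunits, b \in nonunits &
      forall x, x \in nonunits -> exists r s, [/\ r \in R, s \in R & x = r * a + s * b]]].

(* R contains k and the natural map k -> R/m is onto, i.e. R/m = k *)
Definition residue_field_k : Prop :=
  (forall c : k, iota c \in R) /\
  (forall x, x \in R -> exists c : k, x - iota c \in nonunits).

Variable G : porderZmodType.

Definition ordered_abelian_group : Prop :=
  total (@Order.le _ G) /\ (forall a b c : G, a <= b -> a + c <= b + c).

(* nu : K^* -> G is a valuation (its value at 0 is irrelevant; 0 has value +oo) *)
Definition is_valuation (nu : K -> G) : Prop :=
  (forall x y, x != 0 -> y != 0 -> nu (x * y) = nu x + nu y) /\
  (forall x y, x != 0 -> y != 0 -> x + y != 0 ->
     (nu x <= nu (x + y)) || (nu y <= nu (x + y))).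

Definition val_ring (nu : K -> G) : pred K := fun x => (x == 0) || (0 <= nu x).
Definition val_max (nu : K -> G) : pred K := fun x => (x == 0) || (0 < nu x).

Definition centered_on (nu : K -> G) : Prop :=
  (forall x, x \in R -> x \in val_ring nu) /\
  (forall x, x \in R -> (x \in val_max nu) = (x \in nonunits)).

(* residue field V/m_V has transcendence degree 0 over k: every residue
   class is algebraic over k *)
Definition non_divisorial (nu : K -> G) : Prop :=
  forall x, x \in val_ring nu ->
    exists p : {poly k}, p != 0 /\ (map_poly iota p).[x] \in val_max nu.

Definition I_ge (nu : K -> G) (s : G) : pred K :=
  fun x => (x \in R) && ((x == 0) || (s <= nu x)).
Definition I_gt (nu : K -> G) (s : G) : pred K :=
  fun x => (x \in R) && ((x == 0) || (s < nu x)).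

(* dim_k (I / J) = 1, for R-submodules J <= I of K killed by m:
   the quotient has a nonzero class spanning it over k *)
Definition quot_dim1 (I J : pred K) : Prop :=
  exists x, [/\ x \in I, x \notin J &
    forall y, y \in I -> exists c : k, y - iota c * x \in J].

End FieldDefs.

(* Main.v *)
Require Import Defs.
From HB Require Import structures.
From mathcomp Require Import all_boot all_order all_algebra.
From mathcomp Require Import mpoly.
Import Order.TTheory GRing.Theory Num.Theory.
Local Open Scope ring_scope.

Theorem mainTheorem1 (k : closedFieldType) (K : fieldType)
  (iota : {rmorphism k -> K}) (R : {pred K})
  (G : porderZmodType) (nu : K -> G) :
  [pchar k] =i pred0 ->
  function_field_dim2 iota ->
  regular_local_dim2 R ->
  is_fraction_field R ->
  residue_field_k iota R ->
  ordered_abelian_group G ->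
  is_valuation nu ->
  centered_on R nu ->
  non_divisorial iota nu ->
  forall t : K, t \in nonunits R -> t != 0 ->
    quot_dim1 iota (I_ge R nu (nu t)) (I_gt R nu (nu t)).
Proof.
move=> _ _ [[R0 R1 RB RM] _ _ _ _] _ [Rk _] [tot mon] [numul nuadd] [RV _] nd t.
rewrite /nonunits unfold_in /= => /andP [tR _] t0.
have monl : forall a b c : G, a <= b -> c + a <= c + b.
  by move=> a b c h; rewrite ![c + _]addrC mon.
have pos_lt : forall a s : G, 0 < a -> s < s + a.
  move=> a s; rewrite !lt_def => /andP [a0 ha]; apply/andP; split.
    by apply: contra a0 => /eqP h; apply/eqP; apply: (@addrI _ s); rewrite addr0.
  by have := monl _ _ s ha; rewrite addr0.
have anti : forall a b : G, 0 <= a -> 0 <= b -> a + b = 0 -> a = 0.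
  move=> a b ha hb hab; apply/eqP; rewrite eq_le ha andbT.
  by have := monl _ _ a hb; rewrite hab addr0.
have nu1 : nu 1 = 0.
  by apply: (@addrI _ (nu 1)); rewrite addr0 -numul ?oner_neq0 ?mulr1.
have inV : forall x, x \in R -> x != 0 -> 0 <= nu x.
  by move=> x /RV; rewrite /val_ring unfold_in /= => /orP [->|].
have num1 : nu (-1) = 0.
  have m1R : -1 \in R by rewrite -sub0r RB.
  have m10 : (-1 : K) != 0 by rewrite oppr_eq0 oner_neq0.
  apply: (anti _ (nu (-1))); rewrite ?inV // -numul // mulrNN mulr1 nu1 //.
have nuN : forall x, x != 0 -> nu (- x) = nu x.
  move=> x x0; rewrite -mulN1r numul ?oppr_eq0 ?oner_neq0 // num1 add0r //.
have Vsub : forall x y, x != 0 -> y != 0 -> x - y != 0 ->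
    0 <= nu x -> 0 <= nu y -> 0 <= nu (x - y).
  move=> x y x0 y0 xy hx hy.
  have ny0 : - y != 0 by rewrite oppr_eq0.
  have /orP [h|h] := nuadd x (- y) x0 ny0 xy.
    exact: le_trans h.
  by rewrite nuN // in h; exact: le_trans h.
exists t; split.
- by rewrite unfold_in /= tR le_refl orbT.
- by rewrite unfold_in /= tR /= (negPf t0) ltxx.
move=> y; rewrite unfold_in /= => /andP [yR hy].
have [->|y0] := eqVneq y 0.
  by exists 0; rewrite rmorph0 mul0r subr0 unfold_in /= R0 eqxx.
rewrite (negPf y0) /= le_eqVlt in hy.
case/orP: hy => [/eqP hy|hy]; last first.
  by exists 0; rewrite rmorph0 mul0r subr0 unfold_in /= yR (negPf y0) hy orbT.
set z := y / t.
have z0 : z != 0 by rewrite mulf_neq0 ?invr_eq0.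
have nuti : nu t^-1 = - nu t.
  apply: (@addrI _ (nu t)); rewrite -numul ?invr_eq0 // mulfV // nu1 subrr //.
have nuz : nu z = 0 by rewrite /z numul ?invr_eq0 // nuti hy subrr.
have zV : z \in val_ring nu by rewrite unfold_in /= nuz lexx orbT.
have [p [p0 hp]] := nd z zV.
have [r pr] := closed_field_poly_normal p.
set P := fun c : k => (z - iota c == 0) || (0 < nu (z - iota c)).
have fac : forall c, ~~ P c -> z - iota c != 0 /\ nu (z - iota c) = 0.
  move=> c; rewrite /P negb_or => /andP [f0 fp]; split => //.
  have [->|c0] := eqVneq c 0; first by rewrite rmorph0 subr0.
  have ic0 : iota c != 0 by rewrite fmorph_eq0.
  have h0 : 0 <= nu (z - iota c) by apply: Vsub; rewrite ?nuz ?inV ?Rk.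
  by move: h0; rewrite le_eqVlt (negPf fp) orbF => /eqP.
have prodl : forall r', ~~ has P r' ->
    \prod_(c <- r') (z - iota c) != 0 /\ nu (\prod_(c <- r') (z - iota c)) = 0.
  elim=> [|c r' IH]; first by rewrite big_nil oner_neq0 nu1.
  rewrite /= negb_or => /andP [hc hr]; have [f0 nf] := fac c hc.
  have [q0 nq] := IH hr; rewrite big_cons mulf_neq0 // numul // nf nq addr0 //.
have : has P r.
  apply/negPn/negP => hn; have [q0 nq] := prodl r hn.
  move: hp; rewrite pr map_polyZ rmorph_prod /= hornerZ horner_prod.
  under eq_bigr do rewrite map_polyXsubC hornerXsubC.
  have a0 : lead_coef p != 0 by rewrite lead_coef_eq0.
  have ia0 : iota (lead_coef p) != 0 by rewrite fmorph_eq0.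
  have ia0' : iota (lead_coef p)^-1 != 0 by rewrite fmorph_eq0 invr_eq0.
  have nia : nu (iota (lead_coef p)) = 0.
    apply: (anti _ (nu (iota (lead_coef p)^-1))); rewrite ?inV ?Rk //.
    by rewrite -numul // -rmorphM mulfV // rmorph1 nu1.
  rewrite unfold_in /= mulf_eq0 (negPf ia0) (negPf q0) /= numul // nia nq addr0.
  by rewrite ltxx.
case/hasP => c _; rewrite /P => hc.
exists c; rewrite unfold_in /=.
rewrite (RB _ _ yR (RM _ _ (Rk c) tR)) /=.
have -> : y - iota c * t = t * (z - iota c).
  by rewrite mulrBr [t * z]mulrC /z divfK // [t * _]mulrC.
have [->|f0] := eqVneq (z - iota c) 0; first by rewrite mulr0 eqxx.
move: hc; rewrite (negPf f0) /= => hc.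
by rewrite (negPf (mulf_neq0 t0 f0)) /= numul // pos_lt.
Qed.
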